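(* A feasible solution $(\bm\alpha,\bm\beta)\ge0$ of the problem $$\Gamma^*=\max_{\bm\alpha,\bm\beta\ge0}\min_{c}\alpha(c)\min_{d\in\mathcal P_c}\min_{d'\in\mathcal U_c}G_{d,d'}(\beta(c,d),\beta(c,d'))$$ subject to $\sum_c\alpha(c)=1$ and $\sum_{d\in\mathcal D_c}\beta(c,d)=1$, is optimal only if the following holds: there exists $z>0$ such that for all $c\in\mathcal C$, $d\in\mathcal P_c$ and $d'\in\mathcal U_c$, $$\min_{\tilde d\in\mathcal P_c}\alpha(c)G_{\tilde d,d'}(\beta(c,\tilde d),\beta(c,d'))=\min_{\tilde d'\in\mathcal U_c}\alpha(c)G_{d,\tilde d'}(\beta(c,d),\beta(c,\tilde d'))=z.$$
   Context: Setting. - $\mathcal C$ is a finite set of contexts and $\mathcal D=\bigsqcup_c\mathcal D_c$ a finite set of designs. - Design $d$ has true parameter $\theta^*_d=(\mu^*_d,\eta^*_d)\in\Theta=M\times H$ ($M\subseteq\mathbb R$), with distinct $\mu^*_d$. - $\Theta$ is compact; the KL divergence $D(\theta^*\Vert\theta)$ of the parametric family is finite and continuously differentiable in $\theta$. - $\mathcal P_c$ is the set of the $m_c$ designs in $\mathcal D_c$ with largest $\mu^*_d$, and $\mathcal U_c=\mathcal D_c\setminus\mathcal P_c$. Rate function. For $x,y\ge0$, $$G_{d,d'}(x,y)=\inf\{xD(\theta^*_d\Vert\theta_d)+yD(\theta^*_{d'}\Vert\theta_{d'}):\theta_d,\theta_{d'}\in\Theta,\ \mu_{d'}\ge\mu_d\}.$$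 $G_{d,d'}$ is non-decreasing, concave, continuous, and positively homogeneous of degree 1. *)

(* Defs.v *)
From HB Require Import structures.
From mathcomp Require Import all_boot all_order all_algebra.
From mathcomp Require Import all_classical all_reals all_analysis.
Set Implicit Arguments. Unset Strict Implicit. Unset Printing Implicit Defensive.
Import Order.TTheory GRing.Theory Num.Theory.
Import numFieldNormedType.Exports.
Local Open Scope classical_set_scope.
Local Open Scope ring_scope.

Notation param R k := (R * 'rV[R]_k)%type.

(* f : param -> R is continuously differentiable on A: on some open set
   containing A, f is differentiable and every directional derivative
   x |-> 'd f x v is continuous (equivalent to C^1 in finite dimension). *)
Definition C1_on {R : realType} {k : nat} (f : param R k -> R)
    (A : set (param R k)) : Prop :=
  exists U : set (param R k), [/\ open U, A `<=` U,
    (forall x, U x -> differentiable f x) &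
    (forall v : param R k, {in U, continuous (fun x => 'd f x v)})].

Definition minover {R : realType} {T : Type} (A : set T) (f : T -> R) : R :=
  inf [set f x | x in A].

Section Setting.
Variables (R : realType) (k : nat) (C D : finType).
Variables (ctx : D -> C) (Theta : set (param R k))
          (KL : param R k -> param R k -> R) (thstar : D -> param R k)
          (m : C -> nat).

Definition mu (th : param R k) : R := th.1.

Definition Dc (c : C) : set D := [set d | ctx d = c].

(* P_c : the m_c designs of D_c with largest true mean (means are distinct),
   i.e. those designs of D_c beaten by fewer than m_c designs of D_c. *)
Definition Pc (c : C) : set D :=
  [set d | ctx d = c /\
     (#|[set d' : D | (ctx d' == c) && (mu (thstar d) < mu (thstar d'))%R]| < m c)%N].

Definition Uc (c : C) : set D := Dc c `\` Pc c.

Definition G (d d' : D) (x y : R) : R :=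
  inf [set x * KL (thstar d) t.1 + y * KL (thstar d') t.2
       | t in [set t : param R k * param R k |
               Theta t.1 /\ Theta t.2 /\ mu t.1 <= mu t.2]].

Definition feasible (alpha : C -> R) (beta : D -> R) : Prop :=
  [/\ (forall c, 0 <= alpha c), (forall d, 0 <= beta d),
      \sum_(c : C) alpha c = 1 &
      forall c, \sum_(d : D | ctx d == c) beta d = 1].

Definition objective (alpha : C -> R) (beta : D -> R) : R :=
  minover setT (fun c => alpha c *
    minover (Pc c) (fun d => minover (Uc c) (fun d' => G d d' (beta d) (beta d')))).

Definition optimal (alpha : C -> R) (beta : D -> R) : Prop :=
  feasible alpha beta /\
  forall alpha' beta', feasible alpha' beta' -> objective alpha' beta' <= objective alpha beta.

End Setting.

(* Main.v *)
Require Import Defs.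
From HB Require Import structures.
From mathcomp Require Import all_boot all_order all_algebra.
From mathcomp Require Import all_classical all_reals all_analysis.
From mathcomp Require Import ring lra.
Set Implicit Arguments. Unset Strict Implicit. Unset Printing Implicit Defensive.
Import Order.TTheory GRing.Theory Num.Theory.
Import numFieldNormedType.Exports.
Local Open Scope classical_set_scope.
Local Open Scope ring_scope.

Lemma minover_attain (R : realType) (T : finType) (A : set T) (f : T -> R) x1 :
  A x1 -> exists2 x0, A x0 & minover A f = f x0 /\ forall x, A x -> f x0 <= f x.
Proof.
move=> Ax1.
have Px1 : `[< A x1 >] by apply/asboolP.
case: (@arg_minP _ R T x1 (fun x => `[< A x >]) f Px1) => x0 /asboolP Ax0 Hmin.
have Hle : forall x, A x -> f x0 <= f x by move=> x Ax; apply: Hmin; apply/asboolP.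
exists x0 => //; split => //.
apply/eqP; rewrite eq_le; apply/andP; split.
  apply: ge_inf; last by exists x0.
  by exists (f x0) => _ [x Ax <-]; exact: Hle.
by apply: lb_le_inf; [exists (f x0), x0|move=> _ [x Ax <-]; exact: Hle].
Qed.

Lemma minover_le (R : realType) (T : finType) (A : set T) (f : T -> R) x :
  A x -> minover A f <= f x.
Proof. by move=> Ax; have [x0 _ [-> h]] := minover_attain f Ax; exact: h. Qed.

Lemma minover_gt (R : realType) (T : finType) (A : set T) (f : T -> R) b x1 :
  A x1 -> (forall x, A x -> b < f x) -> b < minover A f.
Proof. by move=> Ax h; have [x0 Ax0 [-> _]] := minover_attain f Ax; exact: h. Qed.

Lemma minover_ge (R : realType) (T : finType) (A : set T) (f : T -> R) b x1 :
  A x1 -> (forall x, A x -> b <= f x) -> b <= minover A f.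
Proof. by move=> Ax h; have [x0 Ax0 [-> _]] := minover_attain f Ax; exact: h. Qed.

Lemma minover_eq (R : realType) (T : Type) (A : set T) (f g : T -> R) :
  (forall x, A x -> f x = g x) -> minover A f = minover A g.
Proof. by move=> h; rewrite /minover (eq_imagel h). Qed.
Section GL.
Variables (R : realType) (k : nat) (D : finType) (Th : set (param R k))
  (KL : param R k -> param R k -> R) (thstar : D -> param R k).
Hypothesis hstar : forall d, Th (thstar d).
Hypothesis hKLge0 : forall th th', Th th -> Th th' -> 0 <= KL th th'.
Hypothesis hKLrefl : forall th, Th th -> KL th th = 0.

Let GS d d' x y := [set x * KL (thstar d) t.1 + y * KL (thstar d') t.2
       | t in [set t : param R k * param R k |
               Th t.1 /\ Th t.2 /\ mu t.1 <= mu t.2]].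

Lemma GS_ne d d' x y : GS d d' x y !=set0.
Proof.
exists (x * KL (thstar d) (thstar d') + y * KL (thstar d') (thstar d')).
by exists (thstar d', thstar d') => //=; do ?split => //.
Qed.

Lemma GS_lb d d' x y : 0 <= x -> 0 <= y -> lbound (GS d d' x y) 0.
Proof.
move=> x0 y0 _ [t [h1 [h2 _]] <-].
by rewrite addr_ge0 // mulr_ge0 // hKLge0.
Qed.

Lemma G_ge0 d d' x y : 0 <= x -> 0 <= y -> 0 <= G Th KL thstar d d' x y.
Proof. by move=> x0 y0; apply: lb_le_inf; [apply: GS_ne|apply: GS_lb]. Qed.

Lemma G_le_elt d d' x y t : 0 <= x -> 0 <= y -> Th t.1 -> Th t.2 -> mu t.1 <= mu t.2 ->
  G Th KL thstar d d' x y <= x * KL (thstar d) t.1 + y * KL (thstar d') t.2.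
Proof.
move=> x0 y0 h1 h2 h3; apply: ge_inf; first by exists 0; apply: GS_lb.
by exists t.
Qed.

Lemma G_mono d d' x y x' y' : 0 <= x -> 0 <= y -> x <= x' -> y <= y' ->
  G Th KL thstar d d' x y <= G Th KL thstar d d' x' y'.
Proof.
move=> x0 y0 xx yy; apply: lb_le_inf; first exact: GS_ne.
move=> _ [t [h1 [h2 h3]] <-].
apply: le_trans; first exact: (G_le_elt d d' x0 y0 h1 h2 h3).
by rewrite lerD // ler_wpM2r // hKLge0.
Qed.

Lemma G_hom d d' x y s : 0 <= s -> 0 <= x -> 0 <= y ->
  s * G Th KL thstar d d' x y <= G Th KL thstar d d' (s * x) (s * y).
Proof.
move=> s0 x0 y0; apply: lb_le_inf; first exact: GS_ne.
move=> _ [t [h1 [h2 h3]] <-].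
rewrite -!mulrA -mulrDr ler_wpM2l //.
exact: G_le_elt.
Qed.

Lemma G_0l d d' y : 0 <= y -> G Th KL thstar d d' 0 y <= 0.
Proof.
move=> y0; apply: (le_trans (@G_le_elt d d' 0 y (thstar d', thstar d') _ _ _ _ _)) => //=.
by rewrite hKLrefl // mul0r mulr0 addr0.
Qed.

Lemma G_0r d d' x : 0 <= x -> G Th KL thstar d d' x 0 <= 0.
Proof.
move=> x0; apply: (le_trans (@G_le_elt d d' x 0 (thstar d, thstar d) _ _ _ _ _)) => //=.
by rewrite hKLrefl // mul0r mulr0 addr0.
Qed.
End GL.
Section GP.
Variables (R : realType) (k : nat) (D : finType) (Th : set (param R k))
  (KL : param R k -> param R k -> R) (thstar : D -> param R k).
Hypothesis hstar : forall d, Th (thstar d).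
Hypothesis hKLge0 : forall th th', Th th -> Th th' -> 0 <= KL th th'.
Hypothesis hKL0 : forall th th', Th th -> Th th' -> KL th th' = 0 -> th = th'.
Hypothesis hcpt : compact Th.
Hypothesis hcont : forall d th, Th th -> {for th, continuous (KL (thstar d))}.

Lemma G_pos d d' x y : mu (thstar d') < mu (thstar d) -> 0 < x -> 0 < y ->
  0 < G Th KL thstar d d' x y.
Proof.
move=> hmu x0 y0.
pose S := [set t : param R k * param R k | Th t.1 /\ Th t.2 /\ mu t.1 <= mu t.2].
pose f := fun t : param R k * param R k =>
  x * KL (thstar d) t.1 + y * KL (thstar d') t.2.
have Sne : S !=set0 by exists (thstar d', thstar d'); do ?split => //=.
have cS : compact S.
  have -> : S = (Th `*` Th) `&` ((fun t : param R k * param R k => mu t.2 - mu t.1) @^-1` [set r | 0 <= r]).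
    apply/seteqP; split => [t [h1 [h2 h3]]|t [[h1 h2] h3]]; split => //=.
    - by rewrite subr_ge0.
    - by split => //; rewrite -subr_ge0.
  apply: compact_closedI; first exact: compact_setX.
  apply: preimage_closed; last exact: closed_ge.
  move=> t _; apply: cvgB.
    apply: continuous_comp; first exact: cvg_snd.
    exact: cvg_fst.
  apply: continuous_comp; first exact: cvg_fst.
  exact: cvg_fst.
have fc : {within S, continuous f}.
  apply: continuous_in_subspaceT => t; rewrite inE => -[h1 [h2 h3]].
  apply: cvgD.
    apply: cvgMr; apply: continuous_comp; first exact: cvg_fst.
    exact: hcont.
  apply: cvgMr; apply: continuous_comp; first exact: cvg_snd.
  exact: hcont.
have [t0 /set_mem [h1 [h2 h3]] hmin] := compact_EVT_min Sne cS fc.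
have le0 : f t0 <= G Th KL thstar d d' x y.
  apply: lb_le_inf.
    exists (f (thstar d', thstar d')); exists (thstar d', thstar d') => //=. do ?split => //.
  move=> _ [t St <-]; apply: hmin; exact: mem_set.
apply: lt_le_trans le0.
have k1 := hKLge0 (hstar d) h1.
have k2 := hKLge0 (hstar d') h2.
rewrite /f; case: (ltrP 0 (KL (thstar d) t0.1)) => K1.
  by apply: ltr_wpDr; [rewrite mulr_ge0 // ltW | rewrite mulr_gt0].
case: (ltrP 0 (KL (thstar d') t0.2)) => K2.
  by apply: ltr_wpDl; [rewrite mulr_ge0 // ltW | rewrite mulr_gt0].
have e1 : thstar d = t0.1 by apply: hKL0 => //; apply/eqP; rewrite eq_le K1 k1.
have e2 : thstar d' = t0.2 by apply: hKL0 => //; apply/eqP; rewrite eq_le K2 k2.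
by move: h3; rewrite -e1 -e2 leNgt hmu.
Qed.
End GP.
Section PU.
Variables (R : realType) (k : nat) (C D : finType) (ctx : D -> C)
  (thstar : D -> param R k) (m : C -> nat).
Hypothesis hdistinct : injective (fun d => mu (thstar d)).
Hypothesis hm : forall c, (0 < m c)%N /\ (m c < #|[set d : D | ctx d == c]|)%N.

Lemma Pc_ctx c d : Pc ctx thstar m c d -> ctx d = c.
Proof. by case. Qed.

Lemma Uc_ctx c d : Uc ctx thstar m c d -> ctx d = c.
Proof. by case. Qed.

Lemma PU_mu c d d' : Pc ctx thstar m c d -> Uc ctx thstar m c d' ->
  mu (thstar d') < mu (thstar d).
Proof.
move=> [cd hd] [cd' hd'].
rewrite ltNge; apply/negP => le.
apply: hd'; split => //.
apply: (leq_ltn_trans _ hd); apply: subset_leq_card. apply/fintype.subsetP => x.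
rewrite !inE => /andP [cx lt]; rewrite /= cx /=; exact: le_lt_trans lt.
Qed.

Lemma Dc_ex c : exists d, ctx d = c.
Proof.
have [_ h] := hm c.
have : (0 < #|[set d : D | ctx d == c]|)%N by apply: leq_ltn_trans h.
by move=> /card_gt0P [d]; rewrite inE => /eqP; exists d.
Qed.

Lemma Pc_ne c : exists d, Pc ctx thstar m c d.
Proof.
have [i0 ci0] := Dc_ex c.
have ci0' : ctx i0 == c by apply/eqP.
case: (@arg_maxP _ R D i0 (fun i => ctx i == c) (fun i => mu (thstar i)) ci0') => d /eqP cd hmax.
exists d; split => //.
rewrite (_ : #|[set d' : D | (ctx d' == c) && (mu (thstar d) < mu (thstar d'))]| = 0%N).
  by case: (hm c).
apply: eq_card0 => x; rewrite [RHS]inE; apply/negbTE/negP; rewrite in_setE /= => /andP [cx lt].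
have := hmax x cx; by rewrite /= leNgt lt.
Qed.

Lemma Uc_ne c : exists d, Uc ctx thstar m c d.
Proof.
have [i0 ci0] := Dc_ex c.
have ci0' : ctx i0 == c by apply/eqP.
case: (@arg_minP _ R D i0 (fun i => ctx i == c) (fun i => mu (thstar i)) ci0') => d /eqP cd hmin.
exists d; split => //; move=> [_ hd].
have [_ h] := hm c.
suff : (#|[set d : D | ctx d == c]| <= (#|[set d' : D | (ctx d' == c) && (mu (thstar d) < mu (thstar d'))%R]|).+1)%N.
  by move=> h2; have := leq_trans h h2; rewrite ltnS leqNgt hd.
have dD : d \in [set d : D | ctx d == c] by rewrite in_setE /= cd.
rewrite (cardD1 d) dD add1n ltnS.
apply: subset_leq_card; apply/fintype.subsetP => x.
rewrite inE => /andP [nx]; rewrite !in_setE /= => cx.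
rewrite cx /= lt_neqAle hmin // andbT.
apply/negP => /eqP e; move/eqP: nx; apply; exact: hdistinct.
Qed.
End PU.
Lemma rebalance (R : realType) (C : finType) (a w : C -> R) (z : R) (c0 : C) :
  (forall c, 0 <= a c) -> \sum_(c : C) a c = 1 -> (forall c, 0 <= w c) -> 0 < z ->
  (forall c, z <= a c * w c) -> z < a c0 * w c0 ->
  exists a' : C -> R, [/\ forall c, 0 <= a' c, \sum_(c : C) a' c = 1 &
     forall c, z < a' c * w c].
Proof.
move=> a0 asum w0 z0 hz hz0.
set Dl := a c0 * w c0 - z.
have Dl0 : 0 < Dl by rewrite subr_gt0.
set e := Dl / (2 * (w c0 + 1)).
have w1 : 0 < w c0 + 1 by apply: ltr_wpDl.
have e0 : 0 < e by rewrite divr_gt0 // mulr_gt0.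
have ew : e * (w c0 + 1) = Dl / 2 by rewrite /e; field; rewrite gt_eqF.
have hsplit : \sum_(c : C) a c = a c0 + \sum_(c | c != c0) a c by rewrite (bigD1 c0).
have rest0 : 0 <= \sum_(c | c != c0) a c by apply: sumr_ge0.
have a1 : a c0 <= 1 by rewrite -asum hsplit lerDl.
have ac0 := a0 c0; have wc0 := w0 c0.
have ea : e <= a c0 / 2.
  rewrite -(ler_pM2r w1) ew; rewrite /Dl; nra.
exists (fun c => if c == c0 then a c0 - e * (1 - a c0) else a c * (1 + e)); split.
- move=> c; case: eqP => _; last by rewrite mulr_ge0 // addr_ge0 // ltW.
  rewrite subr_ge0; nra.
- rewrite (bigD1 c0) //= eqxx.
  rewrite (eq_bigr (fun c => a c * (1 + e))); last by move=> c /negbTE ->.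
  rewrite -mulr_suml.
  have -> : \sum_(i | i != c0) a i = 1 - a c0 by rewrite -asum hsplit addrAC subrr add0r.
  ring.
- move=> c; case: eqP => [->|_].
    have : z + Dl = a c0 * w c0 by rewrite /Dl addrC subrK.
    nra.
  have := hz c; nra.
Qed.
Section Main.
Variables (R : realType) (k : nat) (C D : finType)
  (ctx : D -> C) (M : set R) (H : set 'rV[R]_k)
  (KL : param R k -> param R k -> R) (thstar : D -> param R k) (m : C -> nat).
Hypothesis hcompact : compact (M `*` H).
Hypothesis hstar : forall d, (M `*` H) (thstar d).
Hypothesis hdistinct : injective (fun d => mu (thstar d)).
Hypothesis hm : forall c, (0 < m c)%N /\ (m c < #|[set d : D | ctx d == c]|)%N.
Hypothesis hKLge0 : forall th th', (M `*` H) th -> (M `*` H) th' -> 0 <= KL th th'.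
Hypothesis hKL0 : forall th th', (M `*` H) th -> (M `*` H) th' ->
            KL th th' = 0 <-> th = th'.
Hypothesis hKLC1 : forall th, (M `*` H) th -> C1_on (KL th) (M `*` H).

Let Th := M `*` H.
Let Gf := G Th KL thstar.
Let P := Pc ctx thstar m.
Let U := Uc ctx thstar m.

Let hKLrefl : forall th, Th th -> KL th th = 0.
Proof. by move=> th h; apply/(hKL0 h h). Qed.

Let hKL0' : forall th th', Th th -> Th th' -> KL th th' = 0 -> th = th'.
Proof. by move=> th th' h h'; case: (hKL0 h h'). Qed.

Let hcont : forall d th, Th th -> {for th, continuous (KL (thstar d))}.
Proof.
move=> d th hth; have [V [_ sub hd _]] := hKLC1 (hstar d).
exact/differentiable_continuous/hd/sub.
Qed.

Definition Wf (beta : D -> R) (c : C) : R :=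
  minover (P c) (fun d => minover (U c) (fun d' => Gf d d' (beta d) (beta d'))).

Lemma objE alpha beta :
  objective ctx Th KL thstar m alpha beta = minover setT (fun c => alpha c * Wf beta c).
Proof. by []. Qed.

Lemma Wf_le beta c p u : P c p -> U c u -> Wf beta c <= Gf p u (beta p) (beta u).
Proof.
move=> hp hu; apply: le_trans (minover_le _ hp) _.
exact: (minover_le (fun d' => Gf p d' (beta p) (beta d')) hu).
Qed.

Lemma Wf_ge0 beta c : (forall d, 0 <= beta d) -> 0 <= Wf beta c.
Proof.
move=> b0; have [p hp] := Pc_ne thstar hm c; apply: (minover_ge hp) => p' hp'.
have [u hu] := Uc_ne hdistinct hm c; apply: (minover_ge hu) => u' hu'.
exact: G_ge0.
Qed.

Lemma Wf_gt beta c z :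
  (forall p u, P c p -> U c u -> z < Gf p u (beta p) (beta u)) -> z < Wf beta c.
Proof.
move=> h; have [p hp] := Pc_ne thstar hm c; apply: (minover_gt hp) => p' hp'.
have [u hu] := Uc_ne hdistinct hm c; apply: (minover_gt hu) => u' hu'.
exact: h.
Qed.

Lemma Wf_eq beta beta' c : (forall d, ctx d = c -> beta' d = beta d) ->
  Wf beta' c = Wf beta c.
Proof.
move=> h; apply: minover_eq => p hp; apply: minover_eq => u hu.
by rewrite !h //; [exact: Uc_ctx hu | exact: Pc_ctx hp].
Qed.

Lemma obj_lb alpha beta c p u : feasible ctx alpha beta -> P c p -> U c u ->
  objective ctx Th KL thstar m alpha beta <= alpha c * Gf p u (beta p) (beta u).
Proof.
move=> [a0 b0 _ _] hp hu; rewrite objE.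
apply: le_trans (minover_le (fun c => alpha c * Wf beta c) (I : setT c)) _.
by rewrite ler_wpM2l // Wf_le.
Qed.


Lemma card_ctx_pos c : (0 < #|[set d : D | ctx d == c]|)%N.
Proof. by case: (hm c) => h1 h2; apply: leq_ltn_trans h2. Qed.

Lemma obj_pos alpha beta : optimal ctx Th KL thstar m alpha beta ->
  0 < objective ctx Th KL thstar m alpha beta.
Proof.
move=> [[a0 b0 asum bsum] opt].
have [c0 _] : exists c0 : C, True.
  case: (boolP [exists c : C, true]) => [/existsP [c _]|/existsPn h]; first by exists c.
  exfalso; move: asum; rewrite big_pred0 => [/eqP|i]; last by have := h i.
  by rewrite eq_sym oner_eq0.
have cC : (0 < #|C|)%N by apply/card_gt0P; exists c0.
pose a1 := fun c : C => (#|C|%:R : R)^-1.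
pose nD := fun c : C => (#|[set d : D | ctx d == c]|%:R : R).
have nD0 c : 0 < nD c by rewrite /nD ltr0n card_ctx_pos.
pose b1 := fun d : D => (nD (ctx d))^-1.
have fe : feasible ctx a1 b1.
  split.
  - by move=> c; rewrite /a1 invr_ge0.
  - by move=> d; rewrite /b1 invr_ge0 ltW.
  - rewrite sumr_const /a1 (_ : #|xpredT| = #|C|) // -(mulr_natr (#|C|%:R)^-1) mulVf //.
    by rewrite pnatr_eq0 -lt0n.
  - move=> c.
    rewrite (eq_bigr (fun _ => (nD c)^-1)); last by move=> d /eqP hd; rewrite /b1 hd.
    rewrite big_const iter_addr addr0.
    rewrite (_ : #|_| = #|[set d : D | ctx d == c]|); last first.
      apply: eq_card => x; rewrite [RHS]inE; by apply/idP/asboolP.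
    by rewrite -mulr_natr mulVf // gt_eqF.
apply: lt_le_trans (opt _ _ fe).
rewrite objE; apply: (minover_gt (I : setT c0)) => c _.
apply: mulr_gt0; first by rewrite /a1 invr_gt0 ltr0n.
apply: Wf_gt => p u hp hu.
apply: (G_pos hstar hKLge0 hKL0' hcompact hcont (PU_mu hp hu)).
- by rewrite /b1 invr_gt0.
- by rewrite /b1 invr_gt0.
Qed.

Lemma improve alpha beta c e mm :
  optimal ctx Th KL thstar m alpha beta -> ctx e = c ->
  objective ctx Th KL thstar m alpha beta < mm ->
  (forall p u, P c p -> U c u -> (p = e \/ u = e) ->
     mm <= alpha c * Gf p u (beta p) (beta u)) ->
  (exists p u, [/\ P c p, U c u & (p = e \/ u = e)]) -> False.
Proof.
move=> hopt ce zmm H2 [p0 [u0 [hp0 hu0 he0]]].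
have z0 := obj_pos hopt.
move: hopt => [[a0 b0 asum bsum] opt] .
have fe : feasible ctx alpha beta by split.
set z := objective ctx Th KL thstar m alpha beta in z0 zmm opt.
have mm0 : 0 < mm by apply: lt_trans zmm.
have ac0 := a0 c.
have be0 : 0 < beta e.
  rewrite lt_neqAle b0 andbT; apply/negP => /eqP be.
  have := H2 _ _ hp0 hu0 he0.
  have : Gf p0 u0 (beta p0) (beta u0) <= 0.
    case: he0 => ->; rewrite -be.
    - exact: (G_0l hstar hKLge0 hKLrefl).
    - exact: (G_0r hstar hKLge0 hKLrefl).
  move=> hG hmm; have : alpha c * Gf p0 u0 (beta p0) (beta u0) <= 0.
    by rewrite mulr_ge0_le0.
  by move=> h; have := le_trans hmm h; rewrite leNgt mm0.
set q := (mm - z) / (2 * mm).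
have q0 : 0 < q by rewrite divr_gt0 // ?subr_gt0 // mulr_gt0.
have qm : q * mm = (mm - z) / 2 by rewrite /q; field; rewrite gt_eqF.
set eta := q * beta e.
have eta0 : 0 < eta by rewrite mulr_gt0.
pose beta' := fun d => if ctx d == c then (if d == e then beta e - eta * (1 - beta e)
                       else (1 + eta) * beta d) else beta d.
have b'e : beta' e = beta e - eta * (1 - beta e) by rewrite /beta' ce !eqxx.
have b'o d : ctx d = c -> d != e -> beta' d = (1 + eta) * beta d.
  by move=> cd /negbTE nd; rewrite /beta' cd eqxx nd.
have b'c d : ctx d != c -> beta' d = beta d by move=> /negbTE h; rewrite /beta' h.
have b'e_ge : (1 - q) * beta e <= beta' e by rewrite b'e /eta; nra.
have q1 : q < 1 by nra.
have q1' : 0 <= 1 - q by rewrite subr_ge0 ltW.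
have fb : forall d, 0 <= beta' d.
  move=> d; case: (boolP (ctx d == c)) => [/eqP cd|/b'c ->//].
  case: (boolP (d == e)) => [/eqP ->|nd].
    by apply: le_trans b'e_ge; rewrite mulr_ge0 // subr_ge0 ltW.
  by rewrite b'o // mulr_ge0 // addr_ge0 // ltW.
have sb : forall c2, \sum_(d : D | ctx d == c2) beta' d = 1.
  move=> c2; case: (eqVneq c2 c) => [->|nc].
    have ce' : ctx e == c by apply/eqP.
    rewrite (bigD1 e) //= b'e.
    rewrite (eq_bigr (fun d => (1 + eta) * beta d)); last first.
      by move=> d /andP [/eqP cd nd]; rewrite b'o.
    rewrite -mulr_sumr.
    have := bsum c; rewrite (bigD1 e) //= => hs.
    have -> : \sum_(i | (ctx i == c) && (i != e)) beta i = 1 - beta e.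
      by rewrite -hs addrAC subrr add0r.
    ring.
  rewrite -(bsum c2); apply: eq_bigr => d /eqP cd; apply: b'c.
  by rewrite cd.
have fe' : forall a', feasible ctx a' beta' -> True by [].
have hb : forall p u, P c p -> U c u -> z < alpha c * Gf p u (beta' p) (beta' u).
  move=> p u hp hu.
  have cp := Pc_ctx hp; have cu := Uc_ctx hu.
  have zl := obj_lb fe hp hu.
  have bp := b0 p; have bu := b0 u.
  have Gge := G_ge0 hstar hKLge0 p u bp bu.
  case: (eqVneq p e) => [pe|pne]; case: (eqVneq u e) => [ue|une].
  - by exfalso; case: hu => _; rewrite ue -pe.
  -
    have hm2 := H2 _ _ hp hu (or_introl pe).
    have ge1 : (1 - q) * beta p <= beta' p by rewrite pe.
    have ge2 : (1 - q) * beta u <= beta' u.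
      rewrite b'o //; nra.
    have h1 : Gf p u ((1 - q) * beta p) ((1 - q) * beta u) <= Gf p u (beta' p) (beta' u).
      apply: (G_mono hstar hKLge0) => //; rewrite mulr_ge0 // subr_ge0 ltW //.
    have h2 := G_hom hstar hKLge0 p u q1' bp bu.
    have h3 : alpha c * ((1 - q) * Gf p u (beta p) (beta u)) <= alpha c * Gf p u (beta' p) (beta' u).
      by apply: ler_wpM2l => //; exact: le_trans h2 h1.
    rewrite mulrCA in h3.
    apply: lt_le_trans h3; nra.
  -
    have hm2 := H2 _ _ hp hu (or_intror ue).
    have ge2 : (1 - q) * beta u <= beta' u by rewrite ue.
    have ge1 : (1 - q) * beta p <= beta' p.
      rewrite b'o //; nra.
    have h1 : Gf p u ((1 - q) * beta p) ((1 - q) * beta u) <= Gf p u (beta' p) (beta' u).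
      apply: (G_mono hstar hKLge0) => //; rewrite mulr_ge0 // subr_ge0 ltW //.
    have h2 := G_hom hstar hKLge0 p u q1' bp bu.
    have h3 : alpha c * ((1 - q) * Gf p u (beta p) (beta u)) <= alpha c * Gf p u (beta' p) (beta' u).
      by apply: ler_wpM2l => //; exact: le_trans h2 h1.
    rewrite mulrCA in h3.
    apply: lt_le_trans h3; nra.
  - have eta1 : 0 <= 1 + eta by rewrite addr_ge0 // ltW.
    have h2 := G_hom hstar hKLge0 p u eta1 bp bu.
    rewrite (b'o p) // (b'o u) //.
    have h3 : alpha c * ((1 + eta) * Gf p u (beta p) (beta u)) <= alpha c * Gf p u ((1 + eta) * beta p) ((1 + eta) * beta u).
      by apply: ler_wpM2l.
    rewrite mulrCA in h3.
    apply: lt_le_trans h3; nra.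
have Wc : z < alpha c * Wf beta' c.
  rewrite /Wf; have [p1 hp1 [-> _]] := minover_attain (fun d => minover (U c) (fun d' => Gf d d' (beta' d) (beta' d'))) hp0.
  have [u1 hu1 [-> _]] := minover_attain (fun d' => Gf p1 d' (beta' p1) (beta' d')) hu0.
  exact: hb.
have hz2 : forall c2, z <= alpha c2 * Wf beta' c2.
  move=> c2; case: (eqVneq c2 c) => [->|nc]; first exact: ltW.
  rewrite (Wf_eq (beta := beta)); last first.
    by move=> d cd; apply: b'c; rewrite cd.
  rewrite /z objE; exact: (minover_le (fun c => alpha c * Wf beta c) (I : setT c2)).
have [a' [a'0 a'sum a'gt]] := rebalance a0 asum (fun c2 => Wf_ge0 c2 fb) z0 hz2 Wc.
have fe2 : feasible ctx a' beta' by split.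
have := opt _ _ fe2; rewrite objE leNgt => /negP; apply.
by apply: (minover_gt (I : setT c)) => c2 _; exact: a'gt.
Qed.

Lemma prop5_sec alpha beta : optimal ctx Th KL thstar m alpha beta ->
  exists z : R, 0 < z /\
    forall c d d', P c d -> U c d' ->
      minover (P c) (fun dt => alpha c * Gf dt d' (beta dt) (beta d')) = z /\
      minover (U c) (fun dt' => alpha c * Gf d dt' (beta d) (beta dt')) = z.
Proof.
move=> hopt; exists (objective ctx Th KL thstar m alpha beta); split; first exact: obj_pos.
have fe := hopt.1.
move=> c d d' hd hd'.
have cd := Pc_ctx hd; have cd' := Uc_ctx hd'.
split; apply/eqP; rewrite eq_le; apply/andP; split.
- rewrite leNgt; apply/negP => hlt.
  apply: (improve hopt cd' hlt); last by exists d, d'; split => //; right.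
  move=> p u hp hu [pe|ue].
    by exfalso; case: hd' => _; rewrite -pe.
  rewrite ue; exact: (minover_le (fun dt => alpha c * Gf dt d' (beta dt) (beta d')) hp).
- by apply: (minover_ge hd) => p hp; exact: obj_lb fe hp hd'.
- rewrite leNgt; apply/negP => hlt.
  apply: (improve hopt cd hlt); last by exists d, d'; split => //; left.
  move=> p u hp hu [pe|ue].
    rewrite pe; exact: (minover_le (fun dt' => alpha c * Gf d dt' (beta d) (beta dt')) hu).
  by exfalso; case: hu => _; rewrite ue.
- by apply: (minover_ge hd') => u hu; exact: obj_lb fe hd hu.
Qed.
End Main.

Theorem proposition5 (R : realType) (k : nat) (C D : finType)
  (ctx : D -> C) (M : set R) (H : set 'rV[R]_k)
  (KL : param R k -> param R k -> R) (thstar : D -> param R k) (m : C -> nat)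
  (hcompact : compact (M `*` H))
  (hstar : forall d, (M `*` H) (thstar d))
  (hdistinct : injective (fun d => mu (thstar d)))
  (hm : forall c, (0 < m c)%N /\ (m c < #|[set d : D | ctx d == c]|)%N)
  (hKLge0 : forall th th', (M `*` H) th -> (M `*` H) th' -> 0 <= KL th th')
  (hKL0 : forall th th', (M `*` H) th -> (M `*` H) th' ->
            KL th th' = 0 <-> th = th')
  (hKLC1 : forall th, (M `*` H) th -> C1_on (KL th) (M `*` H))
  (alpha : C -> R) (beta : D -> R) :
  optimal ctx (M `*` H) KL thstar m alpha beta ->
  exists z : R, 0 < z /\
    forall c d d', Pc ctx thstar m c d -> Uc ctx thstar m c d' ->
      minover (Pc ctx thstar m c)
        (fun dt => alpha c * G (M `*` H) KL thstar dt d' (beta dt) (beta d')) = z /\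
      minover (Uc ctx thstar m c)
        (fun dt' => alpha c * G (M `*` H) KL thstar d dt' (beta d) (beta dt')) = z.
Proof.
move=> hopt; eapply prop5_sec; eauto.
Qed.
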